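(* There is an absolute constant $c>0$ such that the following holds. Let $G$ be a finite graph with $n\ge 2$ vertices and let $k=\mathrm{mw}_1(G)$. Then $G$ contains disjoint vertex subsets $A,B$ with $|A|\ge c\,n/k^2$ and $|B|\ge c\,n/k^2$ such that $A,B$ are either complete (every $a\in A$ is adjacent to every $b\in B$) or anti-complete (no $a\in A$ is adjacent to any $b\in B$).
   Context: All graphs are finite, simple and undirected. A merge sequence for a graph $G=(V,E)$ is a sequence $(\mathcal{P}_1,R_1),\dots,(\mathcal{P}_m,R_m)$ where: (1) each $\mathcal{P}_i$ is a partition of $V$, $\mathcal{P}_1$ is the partition into singletons, $\mathcal{P}_m=\{V\}$, and each $\mathcal{P}_i$ is coarser than or equal to $\mathcal{P}_{i-1}$ (each part of $\mathcal{P}_i$ is a union of parts of $\mathcal{P}_{i-1}$); (2) $R_1\subseteq R_2\subseteq\dots\subseteq R_m\subseteq\binom{V}{2}$ are sets of unordered pairs of distinct vertices, called resolved pairs; (3) for any two (possibly equal) parts $A,B\in\mathcal{P}_i$, the pairs $\{a,b\}$ with $a\in A$, $b\in B$, $a\ne b$, which are not in $R_i$ (the unresolved pairs between $A$ and $B$) are either all edges of $G$ or all non-edges of $G$. For $r\in\mathbb{N}$, the radius-$r$ width of the merge sequence is the maximum, over all steps $i\ge 2$ and all vertices $v\in V$, of the number of parts of $\mathcal{P}_{i-1}$ that contain a vertex at distance at most $r$ from $v$ in the graph $(V,R_i)$. The radius-$r$ merge-width $\mathrm{mw}_r(G)$ is the minimum radius-$r$ width of a merge sequence for $G$. *)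

(* Defs.v *)
From mathcomp Require Import all_boot all_order all_algebra.
Set Implicit Arguments. Unset Strict Implicit. Unset Printing Implicit Defensive.

Section MergeWidth.
Variable T : finType.

(* A partition of the vertex set is a {set {set T}}; resolved pairs are a
   set of 2-element subsets of T (unordered pairs of distinct vertices). *)
Definition part_t := {set {set T}}.
Definition pairs_t := {set {set T}}.

Definition singletons : part_t := [set [set x] | x : T].

Definition pairset (R : pairs_t) : Prop := forall p, p \in R -> #|p| = 2.

Definition coarser (P Q : part_t) : Prop :=
  forall A, A \in Q -> exists2 B, B \in P & A \subset B.

Definition homogeneous (e : rel T) (P : part_t) (R : pairs_t) : Prop :=
  forall A B, A \in P -> B \in P ->
    (forall a b, a \in A -> b \in B -> a != b -> [set a; b] \notin R -> e a b)
    \/ (forall a b, a \in A -> b \in B -> a != b -> [set a; b] \notin R -> ~~ e a b).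

Definition step := (part_t * pairs_t)%type.
Definition dstep : step := (set0, set0).

(* merge sequence (P_1,R_1),...,(P_m,R_m), stored 0-indexed *)
Definition merge_seq (e : rel T) (s : seq step) : Prop :=
  [/\ 0 < size s,
      (nth dstep s 0).1 = singletons,
      (nth dstep s (size s).-1).1 = [set [set: T]],
      (forall i, i < size s ->
         [/\ partition (nth dstep s i).1 [set: T],
             pairset (nth dstep s i).2 &
             homogeneous e (nth dstep s i).1 (nth dstep s i).2]) &
      (forall i, i.+1 < size s ->
         coarser (nth dstep s i.+1).1 (nth dstep s i).1 /\
         (nth dstep s i).2 \subset (nth dstep s i.+1).2)].

Fixpoint ball (R : pairs_t) (r : nat) (v : T) : {set T} :=
  match r with
  | 0 => [set v]
  | r'.+1 => let B := ball R r' v in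
             B :|: [set u | [exists w in B, [set w; u] \in R]]
  end.

Definition nparts (P : part_t) (R : pairs_t) (r : nat) (v : T) : nat :=
  #|[set A in P | A :&: ball R r v != set0]|.

(* radius-r width: max over steps i >= 2 (0-indexed: i+1 >= 1) and v
   of the number of parts of P_{i-1} meeting the r-ball of v in (V,R_i) *)
Definition width (r : nat) (s : seq step) : nat :=
  \max_(i < (size s).-1) \max_(v : T)
     nparts (nth dstep s i).1 (nth dstep s i.+1).2 r v.

Definition is_mw (e : rel T) (r k : nat) : Prop :=
  (exists2 s, merge_seq e s & width r s = k) /\
  (forall s, merge_seq e s -> k <= width r s).

End MergeWidth.

(* Main.v *)
Require Import Defs.
From mathcomp Require Import all_boot all_order all_algebra zify ring.
Import Order.TTheory GRing.Theory Num.Theory.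
Set Implicit Arguments. Unset Strict Implicit. Unset Printing Implicit Defensive.


Lemma sum_sub (I : finType) (P Q : pred I) (F : I -> nat) :
  (forall i, P i -> Q i) -> \sum_(i | P i) F i <= \sum_(i | Q i) F i.
Proof.
move=> H; rewrite big_mkcond [X in _ <= X]big_mkcond; apply: leq_sum => i _.
by case Pi: (P i); rewrite ?(H _ Pi).
Qed.

Lemma prefix_sel (I : finType) (w : I -> nat) (L : nat) :
  forall (S : {set I}) (mu : nat), (forall Z, Z \in S -> w Z <= L) ->
  mu <= \sum_(Z in S) w Z ->
  exists2 F : {set I}, F \subset S & mu <= \sum_(Z in F) w Z <= mu + L.
Proof.
move=> S; move: {2}#|S| (leqnn #|S|) => n; elim: n S => [|n IH] S hS mu hw hmu.
  have S0 : S = set0 by apply/eqP; rewrite -cards_eq0; lia.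
  move: hmu; rewrite S0 big_set0 leqn0 => /eqP->.
  by exists set0; rewrite ?sub0set // big_set0.
case: (set_0Vmem S) => [S0|[z zS]].
  move: hmu; rewrite S0 big_set0 leqn0 => /eqP->.
  by exists set0; rewrite ?sub0set // big_set0.
have hwz := hw z zS.
case: (leqP mu (w z)) => hz.
  exists [set z]; first by rewrite sub1set.
  by rewrite big_set1 hz /=; lia.
have hS' : #|S :\ z| <= n by move: hS; rewrite (cardsD1 z S) zS; lia.
have hw' : forall Z, Z \in S :\ z -> w Z <= L by move=> Z; rewrite inE => /andP[_ /hw].
move: hmu; rewrite (big_setD1 z zS) /= => hmu.
have [F FS hF] := IH (S :\ z) hS' (mu - w z) hw' ltac:(lia).
have zF : z \notin F by apply/negP => /(subsetP FS); rewrite !inE eqxx.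
exists (z |: F).
  by apply/subsetP => x; rewrite !inE => /orP[/eqP->//|/(subsetP FS)]; rewrite inE => /andP[].
rewrite big_setU1 //=; lia.
Qed.

Lemma card_bigcup_le (I T : finType) (F : {set I}) (f : I -> {set T}) :
  #|\bigcup_(Z in F) f Z| <= \sum_(Z in F) #|f Z|.
Proof.
elim/big_rec2: _ => [|Z A m _ IH]; first by rewrite cards0.
rewrite cardsU; lia.
Qed.

Lemma ball1_self (T : finType) (R : {set {set T}}) v : v \in ball R 1 v.
Proof. by rewrite /= !inE eqxx. Qed.

Lemma ball1_R (T : finType) (R : {set {set T}}) v u : [set v; u] \in R -> u \in ball R 1 v.
Proof.
move=> H; rewrite /= !inE; apply/orP; right; apply/existsP; exists v.
by rewrite inE eqxx.
Qed.

Lemma card_sep (I : finType) (A : {set I}) (c : pred I) :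
  #|[set x in A | c x]| = \sum_(x in A) (c x : nat).
Proof.
rewrite -sum1_card big_mkcond [RHS]big_mkcond; apply: eq_bigr => x _.
by rewrite inE; case: (x \in A); case: (c x).
Qed.


Lemma core (T : finType) (e : rel T) (Pj Pi R : {set {set T}}) (k L : nat) :
  partition Pj [set: T] -> partition Pi [set: T] -> coarser Pi Pj ->
  homogeneous e Pi R ->
  (forall v, nparts Pj R 1 v <= k) -> (forall Z, Z \in Pj -> #|Z| < L) ->
  (exists2 X, X \in Pi & L <= #|X|) -> 0 < k -> 2 <= L -> 64 * k * L <= #|T| ->
  exists A B : {set T},
    [/\ [disjoint A & B], L <= 2 * #|A|, L <= #|B| &
        (forall a b, a \in A -> b \in B -> e a b) \/
        (forall a b, a \in A -> b \in B -> ~~ e a b)].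
Proof.
move=> partj parti coar homo hnp hsmall [X XPi hX] k0 L2 hn.
have trivj : trivIset Pj by case/and3P: partj.
have covj : cover Pj = [set: T] by apply: cover_partition.
have trivi : trivIset Pi by case/and3P: parti.
have covi : cover Pi = [set: T] by apply: cover_partition.
pose PX := [set Z in Pj | Z \subset X].
have PXj : PX \subset Pj by apply/subsetP => Z; rewrite inE => /andP[].
have sumX : L <= \sum_(Z in PX) #|Z|.
  have -> : \sum_(Z in PX) #|Z| = #|cover PX|.
    by apply/eqP; apply: (trivIsetS PXj trivj).
  apply: (leq_trans hX); apply: subset_leq_card; apply/subsetP => x xX.
  have : x \in cover Pj by rewrite covj inE.
  case/bigcupP => Z ZPj xZ.
  have [W WPi ZW] := coar Z ZPj.
  have xW : x \in W by apply: (subsetP ZW).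
  have WX : W = X by rewrite -(def_pblock trivi WPi xW) (def_pblock trivi XPi xX).
  apply/bigcupP; exists Z => //; by rewrite inE ZPj -WX ZW.
have [PY PYX hPY] := @prefix_sel _ (fun Z : {set T} => #|Z|) L PX L
  (fun Z ZP => ltnW (hsmall Z (subsetP PXj Z ZP))) sumX.
have PYj : PY \subset Pj by apply: subset_trans PYX PXj.
pose Y := cover PY.
have cardY : #|Y| = \sum_(Z in PY) #|Z| by apply/esym/eqP; apply: (trivIsetS PYj trivj).
have YX : Y \subset X.
  apply/subsetP => y /bigcupP[Z ZPY yZ].
  by move: (subsetP PYX Z ZPY); rewrite inE => /andP[_ /subsetP]; apply.
have hY : L <= #|Y| <= 2 * L by rewrite cardY; clear - hPY; lia.
pose PO := Pj :\: PY.
have hnsum : #|T| = #|Y| + \sum_(Z in PO) #|Z|.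
  rewrite -cardsT (card_partition partj) (big_setID (A := Pj) PY) /= cardY.
  by rewrite (setIidPr PYj).
pose sZ (Z : {set T}) := #|[set y in Y | Z :&: ball R 1 y != set0]|.
have hsum : \sum_(Z in Pj) sZ Z <= k * #|Y|.
  have -> : \sum_(Z in Pj) sZ Z = \sum_(y in Y) nparts Pj R 1 y.
    rewrite /sZ /nparts.
    under eq_bigr do rewrite card_sep.
    rewrite exchange_big; apply: eq_bigr => y _.
    by rewrite card_sep.
  rewrite mulnC -sum_nat_const; apply: leq_sum => y _; exact: hnp.
pose tau (Z : {set T}) := [forall a in X, forall b in Z,
   (a != b) ==> ([set a; b] \notin R) ==> e a b].
pose MO := \sum_(Z in PO) #|Z|.
have [t ht] : exists t : bool, MO <= 2 * \sum_(Z in PO | tau Z == t) #|Z|.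
  have hs : MO = \sum_(Z in PO | tau Z == true) #|Z| + \sum_(Z in PO | tau Z == false) #|Z|.
    rewrite /MO (bigID (fun Z => tau Z == true)) /=; congr (_ + _).
    by apply: eq_bigl => Z; case: (tau Z); rewrite ?andbT ?andbF.
  case: (leqP MO (2 * \sum_(Z in PO | tau Z == true) #|Z|)) => h; first by exists true.
  by exists false; clear - hs h; lia.
have [Mt hMt] : exists Mt, Mt = \sum_(Z in PO | tau Z == t) #|Z| by eexists.
rewrite -hMt in ht.
have kL : L <= k * L by rewrite leq_pmull.
have hMt31 : 31 * (k * L) <= Mt by clear - hn hnsum hY ht kL; lia.
pose lowc (Z : {set T}) := sZ Z * Mt <= 4 * k * #|Y| * #|Z|.
have Msplit : Mt = \sum_(Z | (Z \in PO) && (tau Z == t) && lowc Z) #|Z|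
                 + \sum_(Z | (Z \in PO) && (tau Z == t) && ~~ lowc Z) #|Z|.
  by rewrite hMt (bigID lowc).
have POj : forall Z, Z \in PO -> Z \in Pj by move=> Z; rewrite inE => /andP[].
have hhigh : 4 * \sum_(Z | (Z \in PO) && (tau Z == t) && ~~ lowc Z) #|Z| <= Mt.
  set H := \sum_(Z | (Z \in PO) && (tau Z == t) && ~~ lowc Z) #|Z|.
  have h1 : \sum_(Z | (Z \in PO) && (tau Z == t) && ~~ lowc Z) (4 * k * #|Y| * #|Z|)
         <= \sum_(Z | (Z \in PO) && (tau Z == t) && ~~ lowc Z) (sZ Z * Mt).
    apply: leq_sum => Z /andP[_]; rewrite /lowc -ltnNge; exact: ltnW.
  rewrite -big_distrr -big_distrl /= -/H in h1.
  have h2 : \sum_(Z | (Z \in PO) && (tau Z == t) && ~~ lowc Z) sZ Z <= \sum_(Z in Pj) sZ Z.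
    by apply: sum_sub => Z /andP[/andP[/POj]].
  have Y0 : 0 < k * #|Y| by rewrite muln_gt0 k0; clear - hY L2; lia.
  have h3 : (4 * H) * (k * #|Y|) <= Mt * (k * #|Y|).
    have -> : (4 * H) * (k * #|Y|) = 4 * k * #|Y| * H by ring.
    apply: (leq_trans h1); rewrite [X in _ <= X]mulnC; apply: leq_mul => //.
    exact: leq_trans h2 hsum.
  by rewrite leq_pmul2r in h3.
pose Low := [set Z | (Z \in PO) && (tau Z == t) && lowc Z].
have LowE : \sum_(Z in Low) #|Z| = \sum_(Z | (Z \in PO) && (tau Z == t) && lowc Z) #|Z|.
  by apply: eq_bigl => Z; rewrite inE.
have Lowj : Low \subset Pj by apply/subsetP => Z; rewrite inE => /andP[/andP[/POj]].
have hLow : L <= \sum_(Z in Low) #|Z| by rewrite LowE; clear - Msplit hhigh hMt31 kL L2; lia.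
have [F FLow hF] := @prefix_sel _ (fun Z : {set T} => #|Z|) L Low L
  (fun Z ZP => ltnW (hsmall Z (subsetP Lowj Z ZP))) hLow.
have Fj : F \subset Pj by apply: subset_trans FLow Lowj.
have hFs : 2 * \sum_(Z in F) sZ Z <= #|Y|.
  have h1 : \sum_(Z in F) (sZ Z * Mt) <= \sum_(Z in F) (4 * k * #|Y| * #|Z|).
    apply: leq_sum => Z ZF; move: (subsetP FLow Z ZF); rewrite inE => /andP[_]; done.
  rewrite -big_distrr -big_distrl /= in h1.
  set SF := \sum_(Z in F) sZ Z in h1 *.
  set WF := \sum_(Z in F) #|Z| in h1 hF.
  have Mt0 : 0 < Mt by clear - hMt31 kL L2; lia.
  have h2 : (2 * SF) * Mt <= #|Y| * Mt.
    have -> : (2 * SF) * Mt = 2 * (SF * Mt) by ring.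
    apply: (leq_trans (leq_mul (leqnn 2) h1)).
    have -> : 2 * (4 * k * #|Y| * WF) = #|Y| * (8 * k * WF) by ring.
    apply: leq_mul => //.
    have : WF <= 2 * L by clear - hF; lia.
    move=> hW; apply: leq_trans (leq_mul (leqnn (8 * k)) hW) _.
    have -> : 8 * k * (2 * L) = 16 * (k * L) by ring.
    clear - hMt31; lia.
  by rewrite leq_pmul2r in h2.
pose A := [set y in Y | [forall Z in F, Z :&: ball R 1 y == set0]].
pose B := cover F.
have hA : #|Y| <= #|A| + \sum_(Z in F) sZ Z.
  have sub : Y \subset A :|: \bigcup_(Z in F) [set y in Y | Z :&: ball R 1 y != set0].
    apply/subsetP => y yY; rewrite inE.
    case yA : (y \in A) => //=.
    move: yA; rewrite inE yY /= => /negbT /forallPn [Z].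
    rewrite negb_imply => /andP[ZF hZ].
    by apply/bigcupP; exists Z => //; rewrite inE yY.
  apply: (leq_trans (subset_leq_card sub)).
  rewrite cardsU.
  have := card_bigcup_le F (fun Z => [set y in Y | Z :&: ball R 1 y != set0]).
  rewrite /sZ => hU; clear - hU; lia.
have hB : #|B| = \sum_(Z in F) #|Z| by apply/esym/eqP; apply: (trivIsetS Fj trivj).
have key : forall a b, a \in A -> b \in B ->
    [/\ a != b, [set a; b] \notin R, a \in X & exists2 Z, Z \in F & (b \in Z) && (tau Z == t)].
  move=> a b; rewrite inE => /andP[aY /forallP hall] /bigcupP[Z ZF bZ].
  have := hall Z; rewrite ZF /= => /eqP hZ0.
  have aX : a \in X by apply: (subsetP YX).
  have tZ : tau Z == t by move: (subsetP FLow Z ZF); rewrite inE => /andP[/andP[_ ->]].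
  split => //.
  - apply/negP => /eqP ab; subst b.
    have : a \in Z :&: ball R 1 a by rewrite inE bZ ball1_self.
    by rewrite hZ0 inE.
  - apply/negP => /ball1_R hb.
    have : b \in Z :&: ball R 1 a by rewrite inE bZ hb.
    by rewrite hZ0 inE.
  - by exists Z => //; rewrite bZ tZ.
exists A, B; split.
- apply/pred0P => a /=; apply/negP => /andP[aA aB].
  by case: (key a a aA aB); rewrite eqxx.
- clear - hA hFs hY; lia.
- rewrite hB; clear - hF; lia.
- have [tv|tv] : t = true \/ t = false by case: (t); auto.
  all: rewrite tv in key.
  + left => a b aA bB; have [ab nR aX [Z ZF /andP[bZ tZ]]] := key a b aA bB.
    move/eqP: tZ => /forallP /(_ a); rewrite aX /= => /forallP /(_ b).
    by rewrite bZ ab nR.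
  + right => a b aA bB; have [ab nR aX [Z ZF /andP[bZ tZ]]] := key a b aA bB.
    have ZPj := subsetP Fj Z ZF.
    have [W WPi ZW] := coar Z ZPj.
    case: (homo X W XPi WPi) => H.
      move: tZ; rewrite /tau => /eqP/negbT/forallPn [a'].
      rewrite negb_imply => /andP[a'X /forallPn [b']].
      rewrite negb_imply => /andP[b'Z].
      rewrite !negb_imply => /and3P[ab' nR' neb'].
      by move: (H a' b' a'X (subsetP ZW b' b'Z) ab' nR'); rewrite (negbTE neb').
    exact: H a b aX (subsetP ZW b bZ) ab nR.
Qed.

Lemma arith_L n k : 0 < k -> 128 * k <= n ->
  [/\ 2 <= n %/ (64 * k), 64 * k * (n %/ (64 * k)) <= n & n <= 128 * k * (n %/ (64 * k))].
Proof.
move=> k0 hn; set L := n %/ (64 * k).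
have d0 : 0 < 64 * k by lia.
have h1 := leq_trunc_div n (64 * k).
have h2 := ltn_ceil n d0.
rewrite -/L in h1 h2.
have e1 : L * (64 * k) = 64 * (k * L) by ring.
have e2 : L.+1 * (64 * k) = 64 * (k * L) + 64 * k by ring.
rewrite e1 in h1; rewrite e2 in h2.
have L2 : 2 <= L.
  case: (leqP 2 L) => // hL.
  have : k * L <= k * 1 by rewrite leq_mul2l; apply/orP; right; lia.
  lia.
split => //.
- have -> : 64 * k * L = 64 * (k * L) by ring. done.
- have -> : 128 * k * L = 128 * (k * L) by ring. lia.
Qed.

Lemma main_nat (T : finType) (e : rel T) (s : seq (step T)) k :
  merge_seq e s -> width 1 s = k -> 0 < k -> 128 * k <= #|T| ->
  exists A B : {set T},
    [/\ [disjoint A & B], #|T| <= 256 * k * #|A|, #|T| <= 256 * k * #|B| &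
        (forall a b, a \in A -> b \in B -> e a b) \/
        (forall a b, a \in A -> b \in B -> ~~ e a b)].
Proof.
move=> [hs0 hs1 hsm hpart hstep] hw k0 hn.
have [L2 hL1 hL2] := arith_L k0 hn.
set L := #|T| %/ (64 * k) in L2 hL1 hL2.
have hnp : forall j v, j.+1 < size s ->
    nparts (nth (dstep T) s j).1 (nth (dstep T) s j.+1).2 1 v <= k.
  move=> j v hj; rewrite -hw /width.
  have hj' : j < (size s).-1 by lia.
  apply: leq_trans (leq_bigmax (Ordinal hj')) => /=.
  exact: leq_bigmax.
pose pr j := (j < size s) && [exists X in (nth (dstep T) s j).1, L <= #|X|].
have hex : exists j, pr j.
  exists (size s).-1; apply/andP; split; first by lia.
  apply/existsP; exists [set: T]; rewrite hsm inE eqxx /= cardsT.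
  apply: leq_trans hL1; rewrite mulnC leq_pmulr //; lia.
case: (ex_minnP hex) => i /andP[hi /existsP[X /andP[XPi hX]]] hmin.
case: i hi XPi hX hmin => [|j] hi XPi hX hmin.
  move: XPi; rewrite hs1 => /imsetP[x _ eX]; move: hX; rewrite eX cards1; lia.
have hsmall : forall Z, Z \in (nth (dstep T) s j).1 -> #|Z| < L.
  move=> Z ZP; rewrite ltnNge; apply/negP => hZ.
  have : pr j by apply/andP; split; [lia | apply/existsP; exists Z; rewrite ZP].
  move/hmin; lia.
have [pj _ _] := hpart j ltac:(lia).
have [pi _ homo] := hpart j.+1 hi.
have [coar _] := hstep j hi.
have [A [B [hd hA hB hc]]] := core pj pi coar homo (fun v => hnp j v hi) hsmall
  (ex_intro2 _ _ X XPi hX) k0 L2 hL1.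
exists A, B; split => //.
- apply: (leq_trans hL2); have -> : 256 * k * #|A| = 128 * k * (2 * #|A|) by ring.
  by rewrite leq_mul2l hA orbT.
- apply: (leq_trans hL2); have -> : 256 * k * #|B| = 128 * k * (2 * #|B|) by ring.
  rewrite leq_mul2l; apply/orP; right; lia.
Qed.


Local Open Scope ring_scope.

Lemma rat_bound (n a k : nat) : (0 < k)%N -> (n <= 256 * k * a)%N ->
  (256%:R^-1 : rat) * n%:R / k%:R ^+ 2 <= a%:R.
Proof.
move=> k0 h.
have hk : (0 : rat) < k%:R ^+ 2 by rewrite exprn_gt0 // ltr0n.
rewrite ler_pdivrMr; last exact: hk.
rewrite [_ * n%:R]mulrC ler_pdivrMr; last by rewrite ltr0n.
rewrite -natrX -!natrM ler_nat.
apply: (leq_trans h).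
have -> : (a * k ^ 2 * 256 = (256 * k * a) * k)%N by ring.
by rewrite leq_pmulr.
Qed.

Theorem theorem1p1 :
  exists2 c : rat, 0 < c &
  forall (T : finType) (e : rel T), symmetric e -> irreflexive e ->
  (2 <= #|T|)%N ->
  forall k : nat, is_mw e 1 k ->
  exists A B : {set T},
    [/\ [disjoint A & B],
        c * (#|T|%:R) / (k%:R ^+ 2) <= (#|A|%:R : rat),
        c * (#|T|%:R) / (k%:R ^+ 2) <= (#|B|%:R : rat) &
        (forall a b, a \in A -> b \in B -> e a b) \/
        (forall a b, a \in A -> b \in B -> ~~ e a b)].
Proof.
exists (256%:R^-1); first by rewrite invr_gt0 ltr0n.
move=> T e _ _ hn k [[s hs hw] _].
case: (posnP k) => [k0|k0].
  have z : (k%:R : rat) ^+ 2 = 0 by rewrite k0 expr2 mulr0n mul0r.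
  exists set0, set0.
  split.
  - by apply/pred0P => x; rewrite /= !inE.
  - by rewrite z invr0 mulr0 cards0.
  - by rewrite z invr0 mulr0 cards0.
  - by left => a b; rewrite inE.
case: (leqP (128 * k) #|T|) => hk.
  have [A [B [hd hA hB hc]]] := main_nat hs hw k0 hk.
  exists A, B; split; [exact: hd | exact: rat_bound k0 hA | exact: rat_bound k0 hB | exact: hc].
have [a [b [_ _ ab]]] := card_gt1P hn.
exists [set a], [set b]; split.
- by rewrite disjoints1 inE.
- have h1 : (#|T| <= 256 * k * 1)%N by lia.
  rewrite cards1; exact: rat_bound k0 h1.
- have h1 : (#|T| <= 256 * k * 1)%N by lia.
  rewrite cards1; exact: rat_bound k0 h1.
- case hab: (e a b); [left|right] => x y; rewrite !inE => /eqP-> /eqP->; by rewrite hab.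
Qed.
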